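(* Suppose the description of $K$ contains a ball constraint $g_m(x)=R^2-\sum_{i=1}^n x_i^2$ for some real $R$. Then for every integer $d\ge d_{\min}$, $-\infty<\operatorname{val}P_d=\operatorname{val}D_d$ (with values in $\mathbb R\cup\{+\infty\}$).
   Context: Polynomial optimization problem: minimize $f(x)=\sum_\alpha f_\alpha x^\alpha$ over $x\in\mathbb R^n$ subject to $g_i(x)=\sum_\alpha g_{i,\alpha}x^\alpha\ge 0$, $i=1,\dots,m$, with real polynomials $f,g_i$; $K=\{x:g_i(x)\ge0,\ i=1,\dots,m\}$. Set $g_0:=1$, $d_i:=\lceil\deg(g_i)/2\rceil$, $d_{\min}:=\max_{i=0,\dots,m}d_i$ (assume $\deg f\le 2d$). For $y=(y_\alpha)_{|\alpha|\le 2d}$, the localizing matrix $M_{d-d_i}(g_iy):=\big(\sum_\gamma g_{i,\gamma}y_{\alpha+\beta+\gamma}\big)_{|\alpha|,|\beta|\le d-d_i}$ is written $\sum_{|\alpha|\le 2d}A_{i,\alpha}y_\alpha$ with real symmetric matrices $A_{i,\alpha}$. $P_d$: $\inf_y\sum_\alpha f_\alpha y_\alpha$ s.t. $y_0=1$, $M_{d-d_i}(g_iy)\succeq0$, $i=0,\dots,m$. $D_d$: $\sup_{z\in\mathbb R,Z_0,\dots,Z_m} z$ s.t. $f_0-z=\sum_{i=0}^m\langle A_{i,0},Z_i\rangle$, $f_\alpha=\sum_{i=0}^m\langle A_{i,\alpha},Z_i\rangle$ for $0<|\alpha|\le 2d$, $Z_i\succeq0$, where $\langle A,B\rangle=\operatorname{trace}(AB)$.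 $\operatorname{val}$ denotes the optimal value, with $\inf\emptyset=+\infty$, $\sup\emptyset=-\infty$. *)

(* Defs.v *)
(* Real numbers are modelled as an arbitrary realFieldType
   satisfying the least-upper-bound property (i.e. a complete ordered field,
   which is the field of real numbers up to isomorphism). *)
From HB Require Import structures.
From mathcomp Require Import all_boot all_order all_algebra.
Set Implicit Arguments. Unset Strict Implicit. Unset Printing Implicit Defensive.
Import Order.TTheory GRing.Theory Num.Theory.
Local Open Scope ring_scope.

Section Defs.
Variable R : realFieldType.

Definition is_lub (S : R -> Prop) (s : R) :=
  (forall x, S x -> x <= s) /\ (forall w, (forall x, S x -> x <= w) -> s <= w).
Definition is_glb (S : R -> Prop) (s : R) :=
  (forall x, S x -> s <= x) /\ (forall w, (forall x, S x -> w <= x) -> w <= s).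

Definition complete_field :=
  forall S : R -> Prop, (exists x, S x) -> (exists M, forall x, S x -> x <= M) ->
  exists s, is_lub S s.

Inductive xR := XFin of R | XPInf | XNInf.

Definition is_infx (S : R -> Prop) (v : xR) : Prop :=
  match v with
  | XFin r => is_glb S r
  | XPInf => forall x, ~ S x
  | XNInf => forall w, exists x, S x /\ x < w
  end.
Definition is_supx (S : R -> Prop) (v : xR) : Prop :=
  match v with
  | XFin r => is_lub S r
  | XPInf => forall w, exists x, S x /\ w < x
  | XNInf => forall x, ~ S x
  end.

Definition MI (n : nat) := {ffun 'I_n -> nat}.
Definition mdeg n (a : MI n) : nat := (\sum_(i < n) a i)%N.
Definition madd n (a b : MI n) : MI n := [ffun i => (a i + b i)%N].
Definition mi0 n : MI n := [ffun _ => 0%N].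

Definition mons n (k : nat) : seq (MI n) :=
  map (fun a : {ffun 'I_n -> 'I_k.+1} => [ffun j => nat_of_ord (a j)] : MI n)
    (enum [pred a : {ffun 'I_n -> 'I_k.+1} | (\sum_j nat_of_ord (a j) <= k)%N]).

(* real polynomials in n variables, as finite lists of terms (alpha, coefficient);
   the coefficient of x^alpha is the sum of the coefficients of terms with
   exponent alpha *)
Definition mpoly n := seq (MI n * R).
Definition coef n (p : mpoly n) (a : MI n) : R := \sum_(t <- p | t.1 == a) t.2.
Definition deg n (p : mpoly n) : nat := (\max_(t <- p | coef p t.1 != 0%R) mdeg t.1)%N.
Definition meval n (p : mpoly n) (x : 'I_n -> R) : R :=
  \sum_(t <- p) t.2 * \prod_(i < n) x i ^+ t.1 i.

Definition poly1 n : mpoly n := [:: (mi0 n, 1)].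
(* the ball polynomial  rad^2 - sum_i x_i^2 *)
Definition ballpoly n (rad : R) : mpoly n :=
  (mi0 n, rad ^+ 2) :: [seq ([ffun i => if i == j then 2%N else 0%N], -1) | j <- enum 'I_n].

Definition gfull n (g : nat -> mpoly n) (i : nat) : mpoly n :=
  if i == 0%N then poly1 n else g i.
Definition dg n (g : nat -> mpoly n) (i : nat) : nat := uphalf (deg (gfull g i)).
Definition dmin n (g : nat -> mpoly n) (m : nat) : nat := (\max_(i < m.+1) dg g i)%N.

Definition msz n (g : nat -> mpoly n) (d i : nat) : nat := size (mons n (d - dg g i)).

Definition locmat n (g : mpoly n) (k : nat) (y : MI n -> R) : 'M[R]_(size (mons n k)) :=
  \matrix_(p, q) \sum_(c <- mons n (deg g))
     coef g c * y (madd (madd (nth (mi0 n) (mons n k) p) (nth (mi0 n) (mons n k) q)) c).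

(* the matrices A_alpha with M_k(g y) = sum_alpha A_alpha y_alpha *)
Definition Amat n (g : mpoly n) (k : nat) (a : MI n) : 'M[R]_(size (mons n k)) :=
  \matrix_(p, q) \sum_(c <- mons n (deg g))
     coef g c * (madd (madd (nth (mi0 n) (mons n k) p) (nth (mi0 n) (mons n k) q)) c == a)%:R.

Definition psd k (M : 'M[R]_k) : Prop :=
  M^T = M /\ forall v : 'cV[R]_k, 0 <= (v^T *m M *m v) ord0 ord0.

Definition frob k (A B : 'M[R]_k) : R := \tr (A *m B).

Definition Pfeas n (g : nat -> mpoly n) (m d : nat) (y : MI n -> R) : Prop :=
  y (mi0 n) = 1 /\ forall i : 'I_m.+1, psd (locmat (gfull g i) (d - dg g i) y).
Definition Pobj n (f : mpoly n) (d : nat) (y : MI n -> R) : R :=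
  \sum_(a <- mons n (2 * d)) coef f a * y a.
Definition Pvals n (f : mpoly n) (g : nat -> mpoly n) (m d : nat) (v : R) : Prop :=
  exists y, Pfeas g m d y /\ Pobj f d y = v.

Definition Dfeas n (f : mpoly n) (g : nat -> mpoly n) (m d : nat) (z : R)
    (Z : forall i : 'I_m.+1, 'M[R]_(msz g d i)) : Prop :=
  (forall i : 'I_m.+1, psd (Z i)) /\
  coef f (mi0 n) - z = \sum_(i < m.+1) frob (Amat (gfull g i) (d - dg g i) (mi0 n)) (Z i) /\
  (forall a, a \in mons n (2 * d) -> a != mi0 n ->
     coef f a = \sum_(i < m.+1) frob (Amat (gfull g i) (d - dg g i) a) (Z i)).
Definition Dvals n (f : mpoly n) (g : nat -> mpoly n) (m d : nat) (z : R) : Prop :=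
  exists Z, @Dfeas n f g m d z Z.

End Defs.

(* Main.v *)
Require Import Defs.
From HB Require Import structures.
From mathcomp Require Import all_boot all_order all_algebra.
From mathcomp Require Import ring lra zify.
From Stdlib Require Import Lia.
From Stdlib Require Import Classical ClassicalEpsilon.
Import Order.TTheory GRing.Theory Num.Theory.
Set Implicit Arguments. Unset Strict Implicit. Unset Printing Implicit Defensive.
Local Open Scope ring_scope.

Section Gen.
Variable R : realFieldType.

Lemma sum_collapse (T : eqType) (s : seq T) (b : T) (H : T -> R) :
  uniq s -> b \in s -> \sum_(x <- s) (x == b)%:R * H x = H b.
Proof.
elim: s => [|x s IH] //= /andP[xs us]; rewrite inE big_cons.
case: eqVneq => [->|xb] /= bs.
  rewrite mul1r big1_seq ?addr0 // => y /= ys.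
  case: eqVneq => [yb|_]; last by rewrite mul0r.
  by rewrite -yb ys in xs.
by rewrite mul0r add0r IH.
Qed.

Lemma sum_nth_collapse (T : eqType) (x0 : T) (s : seq T) (b : T) (H : T -> R) :
  uniq s -> b \in s ->
  \sum_(p < size s) (nth x0 s p == b)%:R * H (nth x0 s p) = H b.
Proof.
move=> us bs; rewrite -(sum_collapse H us bs) (big_nth x0) big_mkord //.
Qed.

Definition bil k (A : 'M[R]_k) (u v : 'cV[R]_k) : R :=
  \sum_p \sum_q u p 0 * A p q * v q 0.

Lemma qf_bil k (A : 'M[R]_k) (v : 'cV[R]_k) : (v^T *m A *m v) 0 0 = bil A v v.
Proof.
rewrite /bil mxE exchange_big; apply: eq_bigr => p _; rewrite mxE big_distrl /=.
by apply: eq_bigr => q _; rewrite !mxE.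
Qed.

Lemma frob_vv k (A : 'M[R]_k) (v : 'cV[R]_k) : frob A (v *m v^T) = bil A v v.
Proof.
rewrite /frob mulmxA mxtrace_mulC mulmxA trace_mx11 qf_bil //.
Qed.

Lemma bilDl k (A : 'M[R]_k) u w v : bil A (u + w) v = bil A u v + bil A w v.
Proof.
rewrite /bil -big_split; apply: eq_bigr => p _; rewrite -big_split.
by apply: eq_bigr => q _; rewrite !mxE !mulrDl.
Qed.
Lemma bilDr k (A : 'M[R]_k) u w v : bil A v (u + w) = bil A v u + bil A v w.
Proof.
rewrite /bil -big_split; apply: eq_bigr => p _; rewrite -big_split.
by apply: eq_bigr => q _; rewrite !mxE !mulrDr.
Qed.
Lemma bilZl k (A : 'M[R]_k) c u v : bil A (c *: u) v = c * bil A u v.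
Proof.
rewrite /bil big_distrr; apply: eq_bigr => p _; rewrite big_distrr.
by apply: eq_bigr => q _; rewrite !mxE -!mulrA.
Qed.
Lemma bilZr k (A : 'M[R]_k) c u v : bil A v (c *: u) = c * bil A v u.
Proof.
rewrite /bil big_distrr; apply: eq_bigr => p _; rewrite big_distrr.
by apply: eq_bigr => q _; rewrite !mxE /= mulrCA.
Qed.

Lemma bilDm k (A B : 'M[R]_k) u v : bil (A + B) u v = bil A u v + bil B u v.
Proof.
rewrite /bil -big_split; apply: eq_bigr => p _; rewrite -big_split.
by apply: eq_bigr => q _; rewrite !mxE mulrDr mulrDl.
Qed.

Lemma bilZm k (A : 'M[R]_k) c u v : bil (c *: A) u v = c * bil A u v.
Proof.
rewrite /bil big_distrr; apply: eq_bigr => p _; rewrite big_distrr.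
by apply: eq_bigr => q _; rewrite !mxE /=; ring.
Qed.
Lemma bilNm k (A : 'M[R]_k) u v : bil (- A) u v = - bil A u v.
Proof. by rewrite -scaleN1r bilZm mulN1r. Qed.

Lemma bil_sym k (A : 'M[R]_k) u v : A^T = A -> bil A u v = bil A v u.
Proof.
move=> hA; rewrite /bil exchange_big; apply: eq_bigr => p _; apply: eq_bigr => q _.
have -> : A q p = A p q by rewrite -{1}hA mxE.
by rewrite mulrC [u q 0 * _]mulrC mulrA.
Qed.

Lemma psd_add k (A B : 'M[R]_k) : psd A -> psd B -> psd (A + B).
Proof.
move=> [sA pA] [sB pB]; split; first by rewrite linearD /= sA sB.
by move=> v; rewrite mulmxDr mulmxDl mxE addr_ge0.
Qed.
Lemma psd_scale k (A : 'M[R]_k) c : 0 <= c -> psd A -> psd (c *: A).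
Proof.
move=> c0 [sA pA]; split; first by rewrite linearZ /= sA.
by move=> v; rewrite -scalemxAr -scalemxAl mxE mulr_ge0.
Qed.
Lemma psd0 k : psd (0 : 'M[R]_k).
Proof. by split; [rewrite trmx0|move=> v; rewrite mulmx0 mul0mx mxE]. Qed.

Lemma psd_vv k (v : 'cV[R]_k) : psd (v *m v^T).
Proof.
split; first by rewrite trmx_mul trmxK.
move=> w; rewrite !mulmxA -mulmxA mxE big_ord1 -[w^T *m v]trmxK trmx_mul trmxK.
by rewrite mxE -expr2 sqr_ge0.
Qed.


Lemma sum_delta_r k (F : 'I_k -> R) i0 : \sum_q F q * (q == i0)%:R = F i0.
Proof.
rewrite (bigD1 i0) //= eqxx mulr1 big1 ?addr0 // => q /negbTE ->; by rewrite mulr0.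
Qed.
Lemma sum_delta_l k (F : 'I_k -> R) i0 : \sum_q (q == i0)%:R * F q = F i0.
Proof. by rewrite -(sum_delta_r F i0); apply: eq_bigr => q _; rewrite mulrC. Qed.

Definition ecol k (a : 'I_k) : 'cV[R]_k := \col_p (p == a)%:R.

Lemma bil_e k (A : 'M[R]_k) a b : bil A (ecol a) (ecol b) = A a b.
Proof.
rewrite /bil -(sum_delta_l (fun p => A p b) a); apply: eq_bigr => p _.
rewrite -(sum_delta_r (fun q => A p q) b) big_distrr /=; apply: eq_bigr => q _.
by rewrite !mxE mulrA.
Qed.
Lemma bil_er k (A : 'M[R]_k) v b : bil A v (ecol b) = \sum_p v p 0 * A p b.
Proof.
rewrite /bil; apply: eq_bigr => p _.
by rewrite -(sum_delta_r (fun q => v p 0 * A p q) b); apply: eq_bigr => q _; rewrite !mxE.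
Qed.

Lemma psd_qf k (A : 'M[R]_k) v : psd A -> 0 <= bil A v v.
Proof. by move=> [_ h]; rewrite -qf_bil. Qed.

Lemma psd_diag0 k (Z : 'M[R]_k) i j : psd Z -> Z i i = 0 -> Z i j = 0.
Proof.
move=> hZ hii; have sZ := hZ.1.
have hsym : Z j i = Z i j by rewrite -{1}sZ mxE.
have key : forall t, 0 <= Z j j + 2%:R * t * Z i j.
  move=> t; have := psd_qf (ecol j + t *: ecol i) hZ.
  rewrite !bilDl !bilDr !bilZl !bilZr !bil_e hii hsym mulr0 mulr0 addr0.
  by rewrite -[2%:R * t * _]mulrA mulr_natl mulr2n addrA.
apply/eqP; apply/negP => /negP nz.
have := key (- (Z j j + 1) / (2%:R * Z i j)).
have -> : 2%:R * (- (Z j j + 1) / (2%:R * Z i j)) * Z i j = - (Z j j + 1).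
  by field.
by rewrite opprD addrA subrr sub0r oppr_ge0 ler10.
Qed.

Lemma frobDr k (A Z1 Z2 : 'M[R]_k) : frob A (Z1 + Z2) = frob A Z1 + frob A Z2.
Proof. by rewrite /frob mulmxDr mxtraceD. Qed.
Lemma frobZr k (A Z : 'M[R]_k) c : frob A (c *: Z) = c * frob A Z.
Proof. by rewrite /frob -scalemxAr mxtraceZ. Qed.
Lemma frob0r k (A : 'M[R]_k) : frob A 0 = 0.
Proof. by rewrite /frob mulmx0 linear0. Qed.
Lemma frobNr k (A Z : 'M[R]_k) : frob A (- Z) = - frob A Z.
Proof. by rewrite /frob mulmxN linearN. Qed.
Lemma frob_suml k I (r : seq I) (F : I -> 'M[R]_k) Z :
  frob (\sum_(j <- r) F j) Z = \sum_(j <- r) frob (F j) Z.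
Proof. by rewrite /frob mulmx_suml linear_sum. Qed.
Lemma frobZl k (A Z : 'M[R]_k) c : frob (c *: A) Z = c * frob A Z.
Proof. by rewrite /frob -scalemxAl mxtraceZ. Qed.

Lemma frob_psd_ge0 k (M Z : 'M[R]_k) : psd M -> psd Z -> 0 <= frob M Z.
Proof.
move=> hM.
suff H : forall K (Z : 'M[R]_k), psd Z -> (#|[set i | Z i i != 0%R]| <= K)%N -> 0 <= frob M Z.
  by move=> hZ; apply: (H _ Z hZ (leqnn _)).
elim=> [|K IH] {}Z hZ.
  rewrite leqn0 cards_eq0 => /eqP h.
  have -> : Z = 0.
    apply/matrixP => i j; rewrite mxE; apply: psd_diag0 => //.
    apply/eqP; apply: contraT => nz.
    suff : i \in [set i | Z i i != 0%R] by rewrite h inE.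
    by rewrite inE.
  by rewrite frob0r.
have [/eqP h0|] := boolP ([set i | Z i i != 0%R] == set0).
  by move=> _; apply: IH => //; rewrite h0 cards0.
case/set0Pn => i0; rewrite inE => nz hcard.
have Zge : 0 <= Z i0 i0 by rewrite -bil_e psd_qf.
have Zpos : 0 < Z i0 i0 by rewrite lt_def nz.
set w := col i0 Z; set c := (Z i0 i0)^-1.
have cpos : 0 < c by rewrite invr_gt0.
set Z' := Z - c *: (w *m w^T).
have sZ := hZ.1.
have hsym : forall a b, Z b a = Z a b by move=> a b; rewrite -{1}sZ mxE.
have hZ' : psd Z'.
  split.
    by rewrite /Z' linearB /= linearZ /= sZ trmx_mul trmxK.
  move=> v; rewrite qf_bil /Z' bilDm.
  set b := \sum_p v p 0 * Z p i0.
  have hb : bil (w *m w^T) v v = b * b.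
    rewrite /bil /b mulr_suml; apply: eq_bigr => p _; rewrite mulr_sumr.
    apply: eq_bigr => q _; rewrite !mxE big_ord1 !mxE; ring.
  have e1 : bil (- (c *: (w *m w^T))) v v = - (c * (b * b)).
    by rewrite bilNm bilZm hb.
  rewrite e1.
  have := psd_qf (v + (-(b*c)) *: ecol i0) hZ.
  rewrite !bilDl !bilDr !bilZl !bilZr bil_e (bil_sym (ecol i0) v hZ.1) bil_er -/b.
  have -> : bil Z v v + - (b * c) * b + (- (b * c) * b + - (b * c) * (- (b * c) * Z i0 i0))
     = bil Z v v - c * (b * b) by rewrite /c; field.
  done.
have hZZ : Z = Z' + c *: (w *m w^T) by rewrite /Z' subrK.
rewrite hZZ frobDr frobZr frob_vv; apply: addr_ge0; last first.
  by apply: mulr_ge0; [exact: ltW|exact: psd_qf].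
apply: IH => //.
have hdiag : forall i, Z' i i = Z i i - c * (Z i i0 * Z i i0).
  by move=> i; rewrite !mxE big_ord1 !mxE.
have sub : [set i | Z' i i != 0%R] \subset [set i | Z i i != 0%R] :\ i0.
  apply/subsetP => i; rewrite !inE hdiag.
  case: (eqVneq i i0) => [->|_] /=.
    by rewrite /c mulrA mulVf // mul1r subrr eqxx.
  case: (eqVneq (Z i i) 0) => // zii.
  by rewrite zii (psd_diag0 i0 hZ zii) mulr0 mulr0 subrr eqxx.
rewrite -ltnS; apply: leq_trans hcard; apply: leq_ltn_trans (subset_leq_card sub) _.
by rewrite (cardsD1 i0 [set i | Z i i != 0%R]) inE nz add1n ltnSn.
Qed.

End Gen.

Section HB.
Variable R : realFieldType.
Variable Rc : complete_field R.

Definition dotp N (x a : 'rV[R]_N) : R := \sum_j x 0 j * a 0 j.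

Lemma dotpDl N (x y a : 'rV[R]_N) : dotp (x + y) a = dotp x a + dotp y a.
Proof. by rewrite /dotp -big_split; apply: eq_bigr => j _; rewrite mxE mulrDl. Qed.
Lemma dotpZl N (x a : 'rV[R]_N) c : dotp (c *: x) a = c * dotp x a.
Proof. by rewrite /dotp big_distrr; apply: eq_bigr => j _; rewrite mxE /=; ring. Qed.
Lemma dotpNl N (x a : 'rV[R]_N) : dotp (- x) a = - dotp x a.
Proof. by rewrite -scaleN1r dotpZl mulN1r. Qed.
Lemma dotpBl N (x y a : 'rV[R]_N) : dotp (x - y) a = dotp x a - dotp y a.
Proof. by rewrite dotpDl dotpNl. Qed.
Lemma dotp0l N (a : 'rV[R]_N) : dotp 0 a = 0.
Proof. by rewrite /dotp big1 // => j _; rewrite mxE mul0r. Qed.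
Lemma dotpDr N (x a b : 'rV[R]_N) : dotp x (a + b) = dotp x a + dotp x b.
Proof. by rewrite /dotp -big_split; apply: eq_bigr => j _; rewrite mxE mulrDr. Qed.
Lemma dotpZr N (x a : 'rV[R]_N) c : dotp x (c *: a) = c * dotp x a.
Proof. by rewrite /dotp big_distrr; apply: eq_bigr => j _; rewrite mxE /=; ring. Qed.
Lemma dotp_delta N (x : 'rV[R]_N) j : dotp x (delta_mx 0 j) = x 0 j.
Proof.
rewrite /dotp (bigD1 j) //= mxE !eqxx mulr1 big1 ?addr0 // => i /negbTE ij.
by rewrite mxE ij andbF mulr0.
Qed.

Lemma dotp_deltal N (a : 'rV[R]_N) j : dotp (delta_mx 0 j) a = a 0 j.
Proof.
rewrite /dotp (bigD1 j) //= mxE !eqxx mul1r big1 ?addr0 // => i /negbTE ij.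
by rewrite mxE ij andbF mul0r.
Qed.

Lemma hb_ext N (p : 'rV[R]_N -> R) (u : 'rV[R]_N) :
  (forall x y, p (x + y) <= p x + p y) ->
  (forall s x, 0 <= s -> p (s *: x) = s * p x) ->
  exists a, (forall x, dotp x a <= p x) /\ dotp u a = p u.
Proof.
move=> sub hom.
have p0 : p 0 = 0 by rewrite -(scale0r 0) hom // mul0r.
suff : forall k, (k <= N)%N -> exists a : 'rV[R]_N, forall t (c : 'rV[R]_N),
    (forall j : 'I_N, (k <= j)%N -> c 0 j = 0) -> t * p u + dotp c a <= p (t *: u + c).
  case/(_ N (leqnn N)) => a ha; exists a; split.
    move=> x; have := ha 0 x; rewrite mul0r add0r scale0r add0r; apply.
    by move=> j; rewrite leqNgt ltn_ord.
  have h1 := ha 1 (- u); rewrite scale1r mul1r subrr p0 dotpNl in h1.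
  have h2 := ha (-1) u; rewrite scaleN1r mulN1r addNr p0 in h2.
  have : p u <= dotp u a.
    by rewrite -subr_le0; apply: h1 => j jN; rewrite leqNgt ltn_ord in jN.
  have : dotp u a <= p u.
    by rewrite -subr_le0 addrC; apply: h2 => j jN; rewrite leqNgt ltn_ord in jN.
  by move=> A B; apply/eqP; rewrite eq_le A B.
elim=> [|k IH] hk.
  exists 0 => t c hc.
  have -> : c = 0 by apply/matrixP => i j; rewrite [RHS]mxE ord1 hc.
  rewrite dotp0l addr0 addr0.
  have [t0|] := boolP (0 <= t); first by rewrite hom.
  rewrite -ltNge => t0.
  have -> : t *: u = (- t) *: (- u) by rewrite scaleNr scalerN opprK.
  rewrite hom; last by rewrite oppr_ge0 ltW.
  have : 0 <= p u + p (- u) by rewrite -p0 -(subrr u) sub.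
  move=> h; nra.
have [a ha] := IH (ltnW hk).
set ok := Ordinal hk.
set ek : 'rV[R]_N := delta_mx 0 ok.
set Z := fun (c : 'rV[R]_N) => forall j : 'I_N, (k <= j)%N -> c 0 j = 0.
set S := fun r => exists t c, Z c /\ r = t * p u + dotp c a - p (t *: u + c - ek).
have bnd : forall t c t' c', Z c -> Z c' ->
    t * p u + dotp c a - p (t *: u + c - ek) <= p (t' *: u + c' + ek) - (t' * p u + dotp c' a).
  move=> t c t' c' zc zc'.
  have h := ha (t + t') (c + c').
  have : (t + t') * p u + dotp (c + c') a <= p (t *: u + c - ek) + p (t' *: u + c' + ek).
    apply: le_trans (h _) _; first by move=> j kj; rewrite mxE zc // zc' // addr0.
    have -> : (t + t') *: u + (c + c') = (t *: u + c - ek) + (t' *: u + c' + ek).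
      by apply/matrixP => i j; rewrite !mxE /=; ring.
    exact: sub.
  by rewrite dotpDl mulrDl; move=> H; lra.
have [s [sub1 sub2]] : exists s, is_lub S s.
  apply: Rc.
    exists (0 * p u + dotp 0 a - p (0 *: u + 0 - ek)); exists 0, 0; split => //.
    by move=> j _; rewrite mxE.
  exists (p (0 *: u + 0 + ek) - (0 * p u + dotp 0 a)) => r [t [c [zc ->]]].
  by apply: bnd => // j _; rewrite mxE.
have sT : forall t' c', Z c' -> s <= p (t' *: u + c' + ek) - (t' * p u + dotp c' a).
  by move=> t' c' zc'; apply: sub2 => r [t [c [zc ->]]]; apply: bnd.
have Ss : forall t c, Z c -> t * p u + dotp c a - p (t *: u + c - ek) <= s.
  by move=> t c zc; apply: sub1; exists t, c.
exists (a + (s - a 0 ok) *: ek) => t c zc.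
set ck := c 0 ok.
set c'' := c - ck *: ek.
have zc'' : Z c''.
  move=> j kj; rewrite !mxE; case: (ltngtP k j) => [kj'|jk'|jk].
  - have jk : (j == ok) = false by apply/eqP => E; rewrite E /= ltnn in kj'.
    by rewrite zc // jk andbF mulr0 subr0.
  - by rewrite ltnNge kj in jk'.
  have -> : j = ok by apply/val_inj.
  by rewrite !eqxx mulr1 subrr.
have dc : dotp c (a + (s - a 0 ok) *: ek) = dotp c'' a + ck * s.
  rewrite dotpDr dotpZr /ek dotp_delta /c'' dotpBl dotpZl dotp_deltal -/ck; ring.
have ec : c = c'' + ck *: ek by rewrite /c'' subrK.
rewrite dc.
have [ckneg|ckpos|ck0] := ltgtP ck 0.
- set m := - ck.
  have mpos : 0 < m by rewrite /m oppr_gt0.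
  have hm : 0 <= m^-1 by rewrite invr_ge0 ltW.
  have zs : Z (m^-1 *: c'') by move=> j kj; rewrite mxE zc'' // mulr0.
  have H := Ss (t / m) _ zs.
  have E1 : (t / m) *: u + m^-1 *: c'' - ek = m^-1 *: (t *: u + c).
    apply/matrixP => i j; rewrite /c'' /m !mxE /=; field.
    by rewrite lt_eqF.
  rewrite E1 (hom _ _ hm) dotpZl in H.
  have := ler_wpM2l (ltW mpos) H.
  have -> : m * (t / m * p u + m^-1 * dotp c'' a - m^-1 * p (t *: u + c))
      = t * p u + dotp c'' a - p (t *: u + c).
    by field; rewrite gt_eqF.
  rewrite /m; lra.
- have hc : 0 <= ck^-1 by rewrite invr_ge0 ltW.
  have zs : Z (ck^-1 *: c'') by move=> j kj; rewrite mxE zc'' // mulr0.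
  have H := sT (t / ck) _ zs.
  have E1 : (t / ck) *: u + ck^-1 *: c'' + ek = ck^-1 *: (t *: u + c).
    apply/matrixP => i j; rewrite /c'' !mxE /=; field.
    by rewrite gt_eqF.
  rewrite E1 (hom _ _ hc) dotpZl in H.
  have := ler_wpM2l (ltW ckpos) H.
  have -> : ck * (ck^-1 * p (t *: u + c) - (t / ck * p u + ck^-1 * dotp c'' a))
      = p (t *: u + c) - (t * p u + dotp c'' a).
    by field; rewrite gt_eqF.
  lra.
have -> : c'' = c by rewrite /c'' ck0 scale0r subr0.
rewrite ck0 mul0r addr0.
apply: ha => j; rewrite leq_eqVlt => /orP [/eqP kj|kj]; last exact: zc.
by have -> : j = ok by apply/val_inj.
Qed.

End HB.

Section Cone.
Variable R : realFieldType.
Variable Rc : complete_field R.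

Lemma glb_ex (S : R -> Prop) : (exists x, S x) -> (exists w, forall x, S x -> w <= x) ->
  exists r, is_glb S r.
Proof.
move=> [x Sx] [w hw].
have [s [s1 s2]] : exists s, is_lub (fun r => S (- r)) s.
  apply: Rc; first by exists (- x); rewrite opprK.
  by exists (- w) => r Sr; rewrite lerNr; apply: hw.
exists (- s); split.
  by move=> y Sy; rewrite lerNl; apply: s1; rewrite opprK.
move=> v hv; rewrite lerNr; apply: s2 => r Sr; rewrite lerNr; exact: hv.
Qed.

Variable N : nat.
Variable Q : 'rV[R]_N -> Prop.
Hypothesis Q0 : Q 0.
Hypothesis QD : forall x y, Q x -> Q y -> Q (x + y).
Hypothesis QZ : forall s x, 0 <= s -> Q x -> Q (s *: x).
Variable e : 'rV[R]_N.
Hypothesis Qe : Q e.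
Hypothesis ou : forall x, exists s, Q (s *: e - x).

Lemma cone_dual h : Q h \/ exists a, (forall q, Q q -> 0 <= dotp q a) /\ dotp e a = 1 /\ dotp h a <= 0.
Proof.
have [Qh|nQh] := classic (Q h); first by left.
right.
have nQe : ~ Q (- e).
  move=> Qne; apply: nQh; have [s hs] := ou (- h).
  have [s0|] := boolP (0 <= s).
    have -> : h = (s *: e - - h) + s *: (- e) by apply/matrixP => i j; rewrite !mxE /=; ring.
    by apply: QD => //; apply: QZ.
  rewrite -ltNge => s0.
  have -> : h = (s *: e - - h) + (- s) *: e by apply/matrixP => i j; rewrite !mxE /=; ring.
  by apply: QD => //; apply: QZ => //; rewrite oppr_ge0 ltW.
have pos : forall s, Q (s *: e) -> 0 <= s.
  move=> s Qs; apply: contraT; rewrite -ltNge => s0; exfalso; apply: nQe.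
  have -> : - e = (- s)^-1 *: (s *: e).
    by apply/matrixP => i j; rewrite !mxE /=; field; rewrite lt_eqF.
  by apply: QZ => //; rewrite invr_ge0 oppr_ge0 ltW.
set Sx := fun x s => Q (s *: e - x).
have gex : forall x, exists r, is_glb (Sx x) r.
  move=> x; apply: glb_ex; first by have [s hs] := ou x; exists s.
  have [s' hs'] := ou (- x); exists (- s') => s hs; rewrite lerNl.
  have : 0 <= s + s'.
    apply: (pos); have -> : (s + s') *: e = (s *: e - x) + (s' *: e - - x).
      by apply/matrixP => i j; rewrite !mxE /=; ring.
    exact: QD.
  lra.
pose p x := epsilon (inhabits (0 : R)) (is_glb (Sx x)).
have pg : forall x, is_glb (Sx x) (p x) by move=> x; apply: epsilon_spec; exact: gex.
have PP1 : forall x s, Q (s *: e - x) -> p x <= s by move=> x s hs; apply: (pg x).1.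
have PP2 : forall x w, (forall s, Q (s *: e - x) -> w <= s) -> w <= p x.
  by move=> x w hw; apply: (pg x).2.
have sub : forall x y, p (x + y) <= p x + p y.
  move=> x y; rewrite -lerBlDr; apply: (PP2) => s hs; rewrite lerBlDl -lerBlDr.
  apply: (PP2) => s' hs'; rewrite lerBlDl; apply: (PP1).
  have -> : (s + s') *: e - (x + y) = (s *: e - x) + (s' *: e - y).
    by apply/matrixP => i j; rewrite !mxE /=; ring.
  exact: QD.
have hom : forall s x, 0 <= s -> p (s *: x) = s * p x.
  move=> s x; rewrite le_eqVlt => /orP [/eqP <-|s0].
    rewrite scale0r mul0r; apply/eqP; rewrite eq_le; apply/andP; split.
      by apply: (PP1); rewrite scale0r subr0.
    by apply: (PP2) => r; rewrite subr0; apply: (pos).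
  apply/eqP; rewrite eq_le; apply/andP; split.
    have h1 : p (s *: x) / s <= p x.
      apply: (PP2) => r hr; rewrite ler_pdivrMr // mulrC; apply: (PP1).
      have -> : (s * r) *: e - s *: x = s *: (r *: e - x).
        by apply/matrixP => i j; rewrite !mxE /=; ring.
      by apply: QZ => //; rewrite ltW.
    by have := ler_wpM2l (ltW s0) h1; rewrite mulrCA mulfV ?gt_eqF // mulr1.
  apply: (PP2) => r hr.
  have h1 : p x <= s^-1 * r.
    apply: (PP1).
    have -> : (s^-1 * r) *: e - x = s^-1 *: (r *: e - s *: x).
      by apply/matrixP => i j; rewrite !mxE /=; field; rewrite gt_eqF.
    by apply: QZ => //; rewrite invr_ge0 ltW.
  by have := ler_wpM2l (ltW s0) h1; rewrite mulrA mulfV ?gt_eqF // mul1r.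
have [a [ha1 ha2]] := hb_ext Rc (- h) sub hom.
exists a; split.
  move=> q Qq; have := ha1 (- q); rewrite dotpNl => H.
  have : p (- q) <= 0 by apply: (PP1); rewrite scale0r sub0r opprK.
  lra.
split.
  have h1 : p e <= 1 by apply: (PP1); rewrite scale1r subrr.
  have h2 : p (- e) <= -1 by apply: (PP1); rewrite scaleN1r subrr.
  have := ha1 e; have := ha1 (- e); rewrite dotpNl; lra.
have : 0 <= p (- h).
  apply: (PP2) => s hs; apply: contraT; rewrite -ltNge => s0; exfalso; apply: nQh.
  have -> : h = (s *: e - - h) + (- s) *: e by apply/matrixP => i j; rewrite !mxE /=; ring.
  by apply: QD => //; apply: QZ => //; rewrite oppr_ge0 ltW.
rewrite -ha2 dotpNl; lra.
Qed.

End Cone.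

Section MI.
Variable n : nat.

Lemma mdeg_ge n' (a : MI n') j : (a j <= mdeg a)%N.
Proof. by rewrite /mdeg (bigD1 j) //= leq_addr. Qed.

Lemma mem_mons k (a : MI n) : (a \in mons n k) = (mdeg a <= k)%N.
Proof.
apply/idP/idP.
  case/mapP => b; rewrite mem_enum inE => hb ->.
  by rewrite /mdeg (eq_bigr (fun j => nat_of_ord (b j))) // => j _; rewrite ffunE.
move=> ha; apply/mapP; exists [ffun j => inord (a j) : 'I_k.+1].
  rewrite mem_enum inE; rewrite (eq_bigr (fun j => a j)) // => j _.
  by rewrite ffunE inordK // ltnS (leq_trans (mdeg_ge a j) ha).
by apply/ffunP => j; rewrite !ffunE inordK // ltnS (leq_trans (mdeg_ge a j) ha).
Qed.

Lemma mons_uniq k : uniq (mons n k).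
Proof.
rewrite map_inj_uniq ?enum_uniq // => b b' /ffunP h; apply/ffunP => j; apply/val_inj.
by have := h j; rewrite !ffunE.
Qed.

Lemma mdeg_add (a b : MI n) : mdeg (madd a b) = (mdeg a + mdeg b)%N.
Proof. by rewrite /mdeg -big_split; apply: eq_bigr => j _; rewrite ffunE. Qed.
Lemma mdeg0 : mdeg (mi0 n) = 0%N.
Proof. by rewrite /mdeg big1 // => j _; rewrite ffunE. Qed.
Lemma maddC (a b : MI n) : madd a b = madd b a.
Proof. by apply/ffunP => j; rewrite !ffunE addnC. Qed.
Lemma maddA (a b c : MI n) : madd a (madd b c) = madd (madd a b) c.
Proof. by apply/ffunP => j; rewrite !ffunE addnA. Qed.
Lemma madd0 (a : MI n) : madd a (mi0 n) = a.
Proof. by apply/ffunP => j; rewrite !ffunE addn0. Qed.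
Lemma mi0_mons k : mi0 n \in mons n k.
Proof. by rewrite mem_mons mdeg0. Qed.
Lemma nth_mons k (p : nat) : (p < size (mons n k))%N -> (mdeg (nth (mi0 n) (mons n k) p) <= k)%N.
Proof. by move=> hp; rewrite -mem_mons mem_nth. Qed.

Lemma split_mi d (c : MI n) : (mdeg c <= d + d)%N ->
  exists a b, c = madd a b /\ (mdeg a <= d)%N /\ (mdeg b <= d)%N.
Proof.
move: {2}(mdeg c) (erefl (mdeg c)) => k; elim: k c => [|k IH] c hc hk.
  exists (mi0 n), (mi0 n); rewrite madd0 mdeg0; split => //.
  apply/ffunP => j; rewrite ffunE; apply/eqP; rewrite -leqn0 -hc; exact: mdeg_ge.
have [i ci] : exists i, (0 < c i)%N.
  apply/existsP; apply: contraT; rewrite negb_exists => /forallP h.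
  have : mdeg c = 0%N by rewrite /mdeg big1 // => j _; have := h j; rewrite lt0n negbK => /eqP.
  by rewrite hc.
set c' := [ffun j => (c j - (j == i))%N].
have ec : c = madd c' [ffun j => nat_of_bool (j == i)].
  apply/ffunP => j; rewrite !ffunE; case: eqVneq => [->|_]; last by rewrite !subn0 addn0.
  by rewrite subnK.
have hc' : mdeg c' = k.
  have := hc; rewrite {1}ec mdeg_add.
  suff -> : mdeg [ffun j => nat_of_bool (j == i)] = 1%N by rewrite addn1 => -[].
  rewrite /mdeg (bigD1 i) //= ffunE eqxx big1 // => j /negbTE ji; by rewrite ffunE ji.
have hk' : (k < d + d)%N by move: hk; rewrite hc.
have [a [b [e' [ha hb]]]] : exists a b, c' = madd a b /\ (mdeg a <= d)%N /\ (mdeg b <= d)%N.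
  by apply: IH => //; rewrite hc' ltnW.
have : (mdeg a + mdeg b = k)%N by rewrite -mdeg_add -e'.
move=> sab.
have hi1 : mdeg [ffun j => nat_of_bool (j == i)] = 1%N.
  rewrite /mdeg (bigD1 i) //= ffunE eqxx big1 // => j /negbTE ji; by rewrite ffunE ji.
case: (ltnP (mdeg a) d) => ad.
  exists (madd a [ffun j => nat_of_bool (j == i)]), b; split.
    by rewrite ec e' -!maddA [madd b _]maddC.
  by rewrite mdeg_add hi1 addn1.
exists a, (madd b [ffun j => nat_of_bool (j == i)]); split.
  by rewrite ec e' -!maddA.
rewrite mdeg_add hi1 addn1; split => //.
rewrite ltnNge; apply/negP => bd; move: hk'; rewrite -sab; lia.
Qed.

End MI.

Section Poly.
Variable R : realFieldType.
Variable n : nat.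
Implicit Types q : mpoly R n.

Lemma mcoefE q a : coef q a = \sum_(t <- q) (t.1 == a)%:R * t.2.
Proof. by rewrite /coef big_mkcond /=; apply: eq_bigr => t _; case: eqP; rewrite ?mul1r ?mul0r. Qed.

Lemma mcoef_nz q a : coef q a != 0 -> exists2 t, t \in q & t.1 = a.
Proof.
move=> h; case: (boolP (has (fun t => t.1 == a) q)) => [/hasP [t tq /eqP ta]|hn].
  by exists t.
exfalso; move/eqP: h; apply; rewrite /coef big_seq_cond big1 // => t /andP [tq ta].
by move/hasPn: hn => /(_ t tq); rewrite ta.
Qed.

Lemma mcoef_deg q a : coef q a != 0 -> (mdeg a <= deg q)%N.
Proof.
move=> h; have [t tq ta] := mcoef_nz h.
rewrite -ta; apply: (leq_bigmax_seq t) => //=; by rewrite ta.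
Qed.

Lemma mdeg_le q k : (forall a, coef q a != 0 -> (mdeg a <= k)%N) -> (deg q <= k)%N.
Proof. by move=> h; apply/bigmax_leqP_seq => t _ /h. Qed.

Lemma mcoef_sum q (S : seq (MI n)) (F : MI n -> R) : uniq S -> (forall t, t \in q -> t.1 \in S) ->
  \sum_(c <- S) coef q c * F c = \sum_(t <- q) t.2 * F t.1.
Proof.
move=> uS hS.
under eq_bigr => c _ do rewrite mcoefE big_distrl /=.
rewrite exchange_big /=; apply: eq_big_seq => t tq.
rewrite -[RHS](sum_collapse (fun c => t.2 * F c) uS (hS t tq)).
apply: eq_bigr => c _; rewrite eq_sym; case: eqP => [->|_]; rewrite ?mul1r ?mul0r //.
Qed.

End Poly.

Section Concrete.
Variable R : realFieldType.
Variables (n m : nat) (f : mpoly R n) (g : nat -> mpoly R n) (d : nat).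
Hypothesis Hd : (dmin g m <= d)%N.

Definition al (j : nat) := nth (mi0 n) (mons n (2 * d)) j.
Definition Nn := size (mons n (2 * d)).
Definition Fam := forall i : 'I_m.+1, 'M[R]_(msz g d i).
Definition Lst (Z : Fam) : 'rV[R]_Nn :=
  \row_(j < Nn) \sum_(i < m.+1) frob (Amat (gfull g i) (d - dg g i) (al j)) (Z i).
Definition QQ (x : 'rV[R]_Nn) := exists Z : Fam, (forall i, psd (Z i)) /\ x = Lst Z.
Definition EE (b : MI n) : 'rV[R]_Nn := \row_(j < Nn) (al j == b)%:R.

Definition fam1 (i : 'I_m.+1) (M : 'M[R]_(msz g d i)) : Fam := fun i' =>
  match i =P i' with ReflectT e => castmx (f_equal (fun k : 'I_m.+1 => msz g d k) e, f_equal (fun k : 'I_m.+1 => msz g d k) e) M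
  | ReflectF _ => 0 end.
Arguments fam1 : clear implicits.

Lemma psd_fam1 (i : 'I_m.+1) (M : 'M[R]_(msz g d i)) : psd M -> forall i', psd (fam1 i M i').
Proof.
move=> hM i'; rewrite /fam1; case: (i =P i') => [e|_]; last exact: psd0.
by case: i' / e; rewrite castmx_id.
Qed.

Lemma Lst_fam1 (i : 'I_m.+1) (M : 'M[R]_(msz g d i)) : Lst (fam1 i M) = \row_(j < Nn) frob (Amat (gfull g i) (d - dg g i) (al j)) M.
Proof.
apply/matrixP => r j; rewrite !mxE (bigD1 i) //= big1 ?addr0.
  by rewrite /fam1; case: (i =P i) => [e|//]; rewrite castmx_id.
move=> i' ne; rewrite /fam1; case: (i =P i') => [e|_]; last by rewrite frob0r.
by rewrite e eqxx in ne.
Qed.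

Lemma QQ0 : QQ 0.
Proof.
exists (fun i => 0); split => [i|]; first exact: psd0.
by apply/matrixP => r j; rewrite !mxE big1 // => i _; rewrite frob0r.
Qed.

Lemma QQD x y : QQ x -> QQ y -> QQ (x + y).
Proof.
move=> [Z [hZ ->]] [Z' [hZ' ->]]; exists (fun i => Z i + Z' i); split.
  by move=> i; apply: psd_add.
by apply/matrixP => r j; rewrite !mxE -big_split; apply: eq_bigr => i _; rewrite frobDr.
Qed.

Lemma QQZ s x : 0 <= s -> QQ x -> QQ (s *: x).
Proof.
move=> s0 [Z [hZ ->]]; exists (fun i => s *: Z i); split.
  by move=> i; apply: psd_scale.
by apply/matrixP => r j; rewrite !mxE big_distrr; apply: eq_bigr => i _; rewrite frobZr.
Qed.

Lemma QQsum I (r : seq I) (F : I -> 'rV[R]_Nn) : (forall i, QQ (F i)) -> QQ (\sum_(i <- r) F i).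
Proof.
move=> h; elim: r => [|a r IH]; first by rewrite big_nil; exact: QQ0.
by rewrite big_cons; apply: QQD.
Qed.

Lemma al_uniq (j j' : 'I_Nn) : (al j == al j') = (j == j').
Proof. by rewrite /al nth_uniq ?mons_uniq. Qed.

Lemma EE_al (j : 'I_Nn) : EE (al j) = delta_mx 0 j.
Proof. by apply/matrixP => r k; rewrite !mxE al_uniq ord1 eqxx. Qed.

Lemma dg_le (i : 'I_m.+1) : (dg g i <= d)%N.
Proof. by apply: leq_trans Hd; rewrite /dmin; apply: (leq_bigmax i). Qed.

Lemma deg_2dg i : (deg (gfull g i) <= 2 * dg g i)%N.
Proof.
rewrite /dg; move: (deg (gfull g i)) => x.
by rewrite uphalf_half -{1}[x](odd_double_half x) -addnn; case: (odd x) => /=; lia.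
Qed.

Lemma locmat_sum (i : 'I_m.+1) (y : MI n -> R) :
  locmat (gfull g i) (d - dg g i) y =
  \sum_(j < Nn) y (al j) *: Amat (gfull g i) (d - dg g i) (al j).
Proof.
apply/matrixP => p q; rewrite !mxE summxE.
under [RHS]eq_bigr => j _ do rewrite !mxE big_distrr /=.
rewrite exchange_big /= big_seq [RHS]big_seq; apply: eq_bigr => c hc.
set b := madd _ c.
have hb : b \in mons n (2 * d).
  rewrite mem_mons /b !mdeg_add.
  have := nth_mons (ltn_ord p); have := nth_mons (ltn_ord q).
  rewrite mem_mons in hc; have := deg_2dg i; have := dg_le i; lia.
rewrite -(sum_nth_collapse (mi0 n) (fun a => coef (gfull g i) c * y a) (mons_uniq n (2 * d)) hb).
apply: eq_bigr => j _; rewrite /al eq_sym; case: eqP => _; rewrite ?mul1r ?mul0r ?mulr0 //.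
by rewrite mulr1 mulrC.
Qed.


Lemma al_of a : a \in mons n (2 * d) -> exists j : 'I_Nn, al j = a.
Proof.
move=> ha; have hi : (index a (mons n (2 * d)) < Nn)%N by rewrite index_mem.
by exists (Ordinal hi); rewrite /al nth_index.
Qed.

Lemma al_mem (j : 'I_Nn) : al j \in mons n (2 * d).
Proof. exact: mem_nth. Qed.

Lemma Pobj_sum y : Pobj f d y = \sum_(j < Nn) coef f (al j) * y (al j).
Proof. by rewrite /Pobj (big_nth (mi0 n)) big_mkord. Qed.

Lemma sum_al (H : MI n -> R) b : b \in mons n (2 * d) ->
  \sum_(j < Nn) (al j == b)%:R * H (al j) = H b.
Proof. by move=> hb; rewrite /al (sum_nth_collapse _ H (mons_uniq n (2 * d)) hb). Qed.

Lemma weak z (Z : Fam) y : @Dfeas R n f g m d z Z -> Pfeas g m d y -> z <= Pobj f d y.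
Proof.
move=> [hZ [h0 ha]] [y0 hy].
have key : forall j : 'I_Nn, coef f (al j) - (al j == mi0 n)%:R * z =
    \sum_(i < m.+1) frob (Amat (gfull g i) (d - dg g i) (al j)) (Z i).
  move=> j; case: eqP => [e|ne].
    by rewrite mul1r e; exact: h0.
  by rewrite mul0r subr0; apply: ha; [exact: al_mem|exact/eqP].
have : 0 <= \sum_(i < m.+1) frob (locmat (gfull g i) (d - dg g i) y) (Z i).
  by apply: sumr_ge0 => i _; apply: frob_psd_ge0; [exact: hy|exact: hZ].
under eq_bigr => i _ do rewrite locmat_sum frob_suml.
under eq_bigr => i _ do under eq_bigr => j _ do rewrite frobZl.
rewrite exchange_big /=.
under eq_bigr => j _ do rewrite -mulr_sumr -key.
rewrite Pobj_sum.
have -> : \sum_(j < Nn) y (al j) * (coef f (al j) - (al j == mi0 n)%:R * z) =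
   \sum_(j < Nn) coef f (al j) * y (al j) - \sum_(j < Nn) (al j == mi0 n)%:R * (z * y (al j)).
  rewrite -sumrB; apply: eq_bigr => j _; ring.
rewrite (sum_al (fun b => z * y b)) ?mi0_mons // y0 mulr1; lra.
Qed.

Definition Fv : 'rV[R]_Nn := \row_(j < Nn) coef f (al j).

Lemma dual_of z : QQ (Fv - z *: EE (mi0 n)) -> Dvals f g m d z.
Proof.
move=> [Z [hZ e]]; exists Z; split => //.
have ent : forall j : 'I_Nn, coef f (al j) - z * (al j == mi0 n)%:R =
    \sum_(i < m.+1) frob (Amat (gfull g i) (d - dg g i) (al j)) (Z i).
  by move=> j; have := congr1 (fun M : 'rV[R]_Nn => M 0 j) e; rewrite !mxE.
split.
  have [j hj] := al_of (mi0_mons n (2 * d)).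
  by have := ent j; rewrite hj eqxx mulr1.
move=> a ha hna; have [j hj] := al_of ha.
by have := ent j; rewrite hj (negbTE hna) mulr0 subr0.
Qed.

Lemma primal_of (a : 'rV[R]_Nn) : (forall q, QQ q -> 0 <= dotp q a) ->
  dotp (EE (mi0 n)) a = 1 -> Pfeas g m d (fun b => dotp (EE b) a) /\
  Pobj f d (fun b => dotp (EE b) a) = dotp Fv a.
Proof.
move=> hQ h1; have yal : forall j : 'I_Nn, dotp (EE (al j)) a = a 0 j.
  by move=> j; rewrite EE_al dotp_deltal.
split; last first.
  by rewrite Pobj_sum [RHS]/dotp; apply: eq_bigr => j _; rewrite yal mxE.
split => // i; split.
  apply/matrixP => p q; rewrite !mxE; apply: eq_bigr => c _.
  by rewrite [madd (nth _ _ q) _]maddC.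
move=> v; rewrite qf_bil -frob_vv locmat_sum frob_suml.
under eq_bigr => j _ do rewrite frobZl yal.
have := hQ _ (ex_intro _ (fam1 i (v *m v^T)) (conj (psd_fam1 (psd_vv v)) (erefl _))).
rewrite Lst_fam1 /dotp; congr (0 <= _); apply: eq_bigr => j _.
by rewrite mxE mulrC.
Qed.

Variable rad : R.
Hypothesis Hm : (1 <= m)%N.
Hypothesis Hball : forall a : MI n, coef (g m) a = coef (ballpoly n rad) a.

Definition ev k (b : MI n) : 'cV[R]_(size (mons n k)) :=
  \col_p ((nth (mi0 n) (mons n k) p == b)%:R).
Definition Gm (q : mpoly R n) (al0 b b' : MI n) :=
  \sum_(c <- mons n (deg q)) coef q c * (madd (madd b b') c == al0)%:R.

Lemma bil_ev q k al0 b b' : b \in mons n k -> b' \in mons n k ->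
  bil (Amat q k al0) (ev k b) (ev k b') = Gm q al0 b b'.
Proof.
move=> hb hb'; rewrite /bil.
rewrite -(sum_nth_collapse (mi0 n) (fun x => Gm q al0 x b') (mons_uniq n k) hb).
apply: eq_bigr => p _.
rewrite -(sum_nth_collapse (mi0 n) (fun x => Gm q al0 (nth (mi0 n) (mons n k) p) x) (mons_uniq n k) hb').
rewrite big_distrr; apply: eq_bigr => p' _; rewrite !mxE /=.
by rewrite /Gm -mulrA [X in _ * X = _]mulrC.
Qed.

Lemma deg_poly1 : deg (@poly1 R n) = 0%N.
Proof. by apply/eqP; rewrite -leqn0; apply: mdeg_le => a /mcoef_deg; rewrite /deg /poly1 big_cons big_nil mdeg0; case: ifP. Qed.

Lemma Gm_poly1 al0 b b' : Gm (@poly1 R n) al0 b b' = (madd b b' == al0)%:R.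
Proof.
rewrite /Gm (@mcoef_sum R n (@poly1 R n) (mons n (deg (@poly1 R n))) (fun c => (madd (madd b b') c == al0)%:R)) ?mons_uniq //.
  by rewrite /poly1 big_cons big_nil /= madd0 mul1r addr0.
by move=> t; rewrite /poly1 inE => /eqP -> /=; exact: mi0_mons.
Qed.

Lemma dg0 : dg g 0 = 0%N.
Proof. by rewrite /dg /gfull /= deg_poly1. Qed.

Notation e0 := (EE (mi0 n)).

Lemma QE0 b : (mdeg b <= d)%N -> QQ (EE (madd b b)).
Proof.
move=> hb; have hb' : b \in mons n (d - dg g (ord0 : 'I_m.+1)) by rewrite dg0 subn0 mem_mons.
exists (fam1 (ord0 : 'I_m.+1) (ev _ b *m (ev _ b)^T)); split; first by apply: psd_fam1; exact: psd_vv.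
rewrite Lst_fam1; apply/matrixP => r j; rewrite !mxE frob_vv bil_ev //.
by rewrite /gfull /= Gm_poly1 eq_sym.
Qed.

Lemma QE1 b b' (s : R) : (mdeg b <= d)%N -> (mdeg b' <= d)%N -> s * s = 1 ->
  QQ (EE (madd b b) + EE (madd b' b') + (2%:R * s) *: EE (madd b b')).
Proof.
move=> hb hb' ss.
have h1 : b \in mons n (d - dg g (ord0 : 'I_m.+1)) by rewrite dg0 subn0 mem_mons.
have h2 : b' \in mons n (d - dg g (ord0 : 'I_m.+1)) by rewrite dg0 subn0 mem_mons.
pose v := ev (d - dg g (ord0 : 'I_m.+1)) b + s *: ev (d - dg g (ord0 : 'I_m.+1)) b'.
exists (fam1 (ord0 : 'I_m.+1) (v *m v^T)); split; first by apply: psd_fam1; exact: psd_vv.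
rewrite Lst_fam1; apply/matrixP => r j; rewrite !mxE frob_vv /v.
rewrite !bilDl !bilDr !bilZl !bilZr !bil_ev // /gfull /= !Gm_poly1.
rewrite (maddC b' b).
have -> : s * (s * ((madd b' b' == al j)%:R : R)) = (madd b' b' == al j)%:R.
  by rewrite mulrA ss mul1r.
rewrite !(eq_sym (al j)).
set x1 := (_ == _)%:R; set x2 := (_ == _)%:R; set x3 := (_ == _)%:R.
ring.
Qed.


Definition t2 (j : 'I_n) : MI n := [ffun i => if i == j then 2%N else 0%N].

Lemma mdeg_t2 j : mdeg (t2 j) = 2%N.
Proof.
rewrite /mdeg (bigD1 j) //= ffunE eqxx big1 // => i /negbTE ij; by rewrite ffunE ij.
Qed.

Lemma t2_inj i j : (t2 i == t2 j) = (i == j).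
Proof.
apply/eqP/eqP => [/ffunP /(_ i)|->//]; rewrite !ffunE eqxx.
by case: eqVneq.
Qed.

Lemma ball_exps t : t \in ballpoly n rad -> (mdeg t.1 <= 2)%N.
Proof.
rewrite /ballpoly inE => /orP [/eqP -> /=|]; first by rewrite mdeg0.
by case/mapP => j _ -> /=; rewrite mdeg_t2.
Qed.

Lemma coef_ball_t2 i : coef (ballpoly n rad) (t2 i) = -1.
Proof.
rewrite mcoefE /ballpoly big_cons big_map /=.
have -> : (mi0 n == t2 i) = false.
  apply/negbTE/eqP => /ffunP /(_ i); by rewrite !ffunE eqxx.
rewrite mul0r add0r big_enum /= (bigD1 i) //= eqxx mul1r big1 ?addr0 // => j /negbTE ji.
by rewrite t2_inj ji mul0r.
Qed.

Lemma gfull_m : gfull g (ord_max : 'I_m.+1) = g m.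
Proof. by rewrite /gfull /=; case: eqP => // m0; move: (Hm); rewrite m0. Qed.

Lemma deg_gm_le : (deg (g m) <= 2)%N.
Proof.
apply: mdeg_le => a; rewrite Hball => /mcoef_nz [t tb <-]; exact: ball_exps.
Qed.

Lemma deg_gm_ge (i : 'I_n) : (2 <= deg (g m))%N.
Proof.
by rewrite -(mdeg_t2 i); apply: mcoef_deg; rewrite Hball coef_ball_t2 oppr_eq0 oner_eq0.
Qed.

Lemma dgm_le1 : (dg g (ord_max : 'I_m.+1) <= 1)%N.
Proof.
rewrite /dg gfull_m; have := deg_gm_le; case: (deg (g m)) => [|[|[|]]] //.
Qed.

Lemma Gm_ball (i : 'I_n) al0 b : Gm (g m) al0 b b =
  rad ^+ 2 * (madd b b == al0)%:R - \sum_(j < n) (madd (madd b b) (t2 j) == al0)%:R.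
Proof.
rewrite /Gm; under eq_bigr => c _ do rewrite Hball.
rewrite (@mcoef_sum R n (ballpoly n rad) (mons n (deg (g m))) (fun c => (madd (madd b b) c == al0)%:R)) ?mons_uniq //.
  rewrite /ballpoly big_cons big_map /= madd0 big_enum /=; congr (_ + _).
  by rewrite -sumrN; apply: eq_bigr => j _; rewrite mulN1r.
move=> t tb; rewrite mem_mons; apply: leq_trans (ball_exps tb) (deg_gm_ge i).
Qed.

Lemma QB (i : 'I_n) b : (mdeg b < d)%N ->
  QQ (rad ^+ 2 *: EE (madd b b) - \sum_(j < n) EE (madd (madd b b) (t2 j))).
Proof.
move=> hb; have hb' : b \in mons n (d - dg g (ord_max : 'I_m.+1)).
  by rewrite mem_mons; have := dgm_le1; lia.
exists (fam1 (ord_max : 'I_m.+1) (ev _ b *m (ev _ b)^T)); split.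
  by apply: psd_fam1; exact: psd_vv.
rewrite Lst_fam1; apply/matrixP => r j; rewrite !mxE frob_vv bil_ev // gfull_m (Gm_ball i).
rewrite summxE; congr (_ * _ - _); first by rewrite eq_sym.
by apply: eq_bigr => k _; rewrite mxE eq_sym.
Qed.


Definition eu (j : 'I_n) : MI n := [ffun k => nat_of_bool (k == j)].

Lemma mdeg_eu j : mdeg (eu j) = 1%N.
Proof. rewrite /mdeg (bigD1 j) //= ffunE eqxx big1 // => i /negbTE ij; by rewrite ffunE ij. Qed.

Lemma madd_eu b j : madd (madd b (eu j)) (madd b (eu j)) = madd (madd b b) (t2 j).
Proof. apply/ffunP => k; rewrite !ffunE; case: (k == j) => /=; lia. Qed.

Lemma QF3 b : (mdeg b <= d)%N -> exists s, QQ (s *: EE (mi0 n) - EE (madd b b)).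
Proof.
move: {2}(mdeg b) (erefl (mdeg b)) => k; elim: k b => [|k IH] b hb hk.
  have -> : b = mi0 n.
    apply/ffunP => j; rewrite ffunE; apply/eqP; rewrite -leqn0 -hb; exact: mdeg_ge.
  by exists 1; rewrite madd0 scale1r subrr; exact: QQ0.
have [i ci] : exists i, (0 < b i)%N.
  apply/existsP; apply: contraT; rewrite negb_exists => /forallP h.
  have : mdeg b = 0%N by rewrite /mdeg big1 // => j _; have := h j; rewrite lt0n negbK => /eqP.
  by rewrite hb.
set b0 := [ffun j => (b j - (j == i))%N].
have eb : b = madd b0 (eu i).
  apply/ffunP => j; rewrite !ffunE; case: eqVneq => [->|_]; last by rewrite !subn0 addn0.
  by rewrite subnK.
have hb0 : mdeg b0 = k by have := hb; rewrite eb mdeg_add mdeg_eu addn1 => -[].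
have hk1 : (mdeg b0 < d)%N by rewrite hb0; move: hk; rewrite hb.
have [s0 hs0] := IH b0 hb0 (ltnW hk1).
have hB := QB i hk1.
rewrite (bigD1 i) //= in hB.
have hS : QQ (\sum_(j < n | j != i) EE (madd (madd b0 b0) (t2 j))).
  rewrite big_mkcond /=; apply: QQsum => j; case: ifP => _; last exact: QQ0.
  rewrite -madd_eu; apply: QE0; rewrite mdeg_add mdeg_eu addn1 //.
exists (rad ^+ 2 * s0).
have -> : (rad ^+ 2 * s0) *: EE (mi0 n) - EE (madd b b) =
  rad ^+ 2 *: (s0 *: EE (mi0 n) - EE (madd b0 b0)) +
  (rad ^+ 2 *: EE (madd b0 b0) - (EE (madd (madd b0 b0) (t2 i)) +
     \sum_(j < n | j != i) EE (madd (madd b0 b0) (t2 j)))) +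
  \sum_(j < n | j != i) EE (madd (madd b0 b0) (t2 j)).
  rewrite eb madd_eu; apply/matrixP => r c; rewrite !mxE; ring.
apply: QQD => //; apply: QQD => //; apply: QQZ => //; exact: sqr_ge0.
Qed.


Lemma QF4 c : c \in mons n (2 * d) ->
  exists s, QQ (s *: EE (mi0 n) - EE c) /\ QQ (s *: EE (mi0 n) + EE c).
Proof.
rewrite mem_mons mul2n -addnn => hc.
have [a [b [-> [ha hb]]]] := split_mi hc.
have [s1 h1] := QF3 ha; have [s2 h2] := QF3 hb.
have hp := QE1 (s := 1) ha hb (mulr1 1).
have hm := QE1 (s := -1) ha hb (etrans (mulrNN 1 1) (mulr1 1)).
have h2i : 0 <= (2%:R : R)^-1 by rewrite invr_ge0 ler0n.
exists ((s1 + s2) / 2%:R); split.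
  have -> : (s1 + s2) / 2%:R *: EE (mi0 n) - EE (madd a b) = 2%:R^-1 *:
     ((s1 *: EE (mi0 n) - EE (madd a a)) + (s2 *: EE (mi0 n) - EE (madd b b)) +
      (EE (madd a a) + EE (madd b b) + (2%:R * -1) *: EE (madd a b))).
    by apply/matrixP => r j; rewrite !mxE; field.
  by apply: QQZ => //; apply: QQD; [apply: QQD|].
have -> : (s1 + s2) / 2%:R *: EE (mi0 n) + EE (madd a b) = 2%:R^-1 *:
   ((s1 *: EE (mi0 n) - EE (madd a a)) + (s2 *: EE (mi0 n) - EE (madd b b)) +
    (EE (madd a a) + EE (madd b b) + (2%:R * 1) *: EE (madd a b))).
  by apply/matrixP => r j; rewrite !mxE; field.
by apply: QQZ => //; apply: QQD; [apply: QQD|].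
Qed.

Lemma ou x : exists s, QQ (s *: EE (mi0 n) - x).
Proof.
suff H : forall r : seq 'I_Nn, exists s, QQ (s *: EE (mi0 n) - \sum_(j <- r) x 0 j *: EE (al j)).
  have [s hs] := H (index_enum 'I_Nn); exists s.
  by rewrite [x in _ - x]row_sum_delta; under eq_bigr => j _ do rewrite -EE_al.
elim=> [|j r [s hs]].
  by exists 0; rewrite big_nil scale0r subrr; exact: QQ0.
have [sj [hm hp]] := QF4 (al_mem j).
rewrite big_cons.
have [xj|] := boolP (0 <= x 0 j).
  exists (s + x 0 j * sj).
  have -> : (s + x 0 j * sj) *: EE (mi0 n) - (x 0 j *: EE (al j) + \sum_(j0 <- r) x 0 j0 *: EE (al j0))
    = (s *: EE (mi0 n) - \sum_(j0 <- r) x 0 j0 *: EE (al j0)) + x 0 j *: (sj *: EE (mi0 n) - EE (al j)).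
    by apply/matrixP => r' c; rewrite !mxE; ring.
  by apply: QQD => //; apply: QQZ.
rewrite -ltNge => xj.
exists (s - x 0 j * sj).
have -> : (s - x 0 j * sj) *: EE (mi0 n) - (x 0 j *: EE (al j) + \sum_(j0 <- r) x 0 j0 *: EE (al j0))
  = (s *: EE (mi0 n) - \sum_(j0 <- r) x 0 j0 *: EE (al j0)) + (- x 0 j) *: (sj *: EE (mi0 n) + EE (al j)).
  by apply/matrixP => r' c; rewrite !mxE; ring.
by apply: QQD => //; apply: QQZ => //; rewrite oppr_ge0 ltW.
Qed.


Lemma Qe0 : QQ (EE (mi0 n)).
Proof. by have := QE0 (b := mi0 n); rewrite madd0 mdeg0; apply. Qed.

Lemma main (Rc : complete_field R) : exists v : xR R,
    v <> XNInf R /\ is_infx (Pvals f g m d) v /\ is_supx (Dvals f g m d) v.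
Proof.
have CD := cone_dual Rc QQ0 QQD QQZ Qe0 ou.
have key : forall z, Dvals f g m d z \/ exists y, Pfeas g m d y /\ Pobj f d y <= z.
  move=> z; case: (CD (Fv - z *: EE (mi0 n))) => [Qh|[a [ha [h1 hh]]]].
    by left; exact: dual_of.
  right; have [hP hO] := primal_of ha h1.
  exists (fun b => dotp (EE b) a); split => //; rewrite hO.
  by move: hh; rewrite dotpBl dotpZl h1 mulr1 subr_le0.
have wk : forall z y, Dvals f g m d z -> Pfeas g m d y -> z <= Pobj f d y.
  by move=> z y [Z hZ] hy; exact: (weak hZ hy).
have [z0 hz0] : exists z0, Dvals f g m d z0.
  have [s hs] := ou (- Fv); exists (- s); apply: dual_of.
  by rewrite scaleNr opprK addrC; move: hs; rewrite opprK.
have [feas|infeas] := classic (exists y, Pfeas g m d y).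
  have [r [r1 r2]] : exists r, is_glb (Pvals f g m d) r.
    apply: glb_ex => //.
      by have [y hy] := feas; exists (Pobj f d y), y.
    by exists z0 => v [y [hy <-]]; apply: wk.
  exists (XFin r); split => //; split; first by split.
  split.
    by move=> z hz; apply: r2 => v [y [hy <-]]; apply: wk.
  move=> w hw; apply: contraT; rewrite -ltNge => wr.
  case: (key ((w + r) / 2%:R)) => [hD|[y [hy hyo]]].
    by have := hw _ hD; lra.
  have := r1 _ (ex_intro _ y (conj hy (erefl _))); lra.
exists (XPInf R); split => //; split.
  by move=> x [y [hy _]]; apply: infeas; exists y.
move=> w; case: (key (w + 1)) => [hD|[y [hy _]]]; last by exfalso; apply: infeas; exists y.
by exists (w + 1); split => //; lra.
Qed.

End Concrete.

Theorem theorem1 (R : realFieldType) (Rcomplete : complete_field R)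
  (n m : nat) (f : mpoly R n) (g : nat -> mpoly R n) (rad : R)
  (Hm : (1 <= m)%N)
  (Hball : forall a : MI n, coef (g m) a = coef (ballpoly n rad) a)
  (d : nat) (Hd : (dmin g m <= d)%N) (Hf : (deg f <= 2 * d)%N) :
  exists v : xR R,
    v <> XNInf R /\ is_infx (Pvals f g m d) v /\ is_supx (Dvals f g m d) v.
Proof. exact: (main f Hd Hm Hball Rcomplete). Qed.
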